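(* Let $A,B,C$ be convex ($1$-convex) sets of real numbers with $|A|=|B|=|C|=N$. Then the number of solutions of $a+b=c$ with $a\in A$, $b\in B$, $c\in C$ is $\ll N^{5/3}$.
   Context: A finite set $A=\{a_1<\dots<a_N\}\subset\mathbb{R}$ is convex ($1$-convex) if the sequence of gaps $a_{i+1}-a_i$, $1\leq i\leq N-1$, is strictly monotone. *)

(* Defs.v *)
From HB Require Import structures.
From mathcomp Require Import all_boot all_order all_algebra.
From mathcomp Require Import finmap.
From mathcomp Require Import all_classical all_reals all_analysis.
Set Implicit Arguments. Unset Strict Implicit. Unset Printing Implicit Defensive.
Import Order.TTheory GRing.Theory Num.Theory.
Local Open Scope ring_scope.
Local Open Scope fset_scope.

Definition sorted_elems (R : realType) (A : {fset R}) : seq R :=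
  sort <=%R (enum_fset A).

Definition gaps (R : realType) (s : seq R) : seq R :=
  [seq s`_i.+1 - s`_i | i <- iota 0 (size s).-1].

Definition one_convex (R : realType) (A : {fset R}) : Prop :=
  sorted <%R (gaps (sorted_elems A)) \/ sorted >%R (gaps (sorted_elems A)).

Definition num_solutions (R : realType) (A B C : {fset R}) : nat :=
  \sum_(a <- enum_fset A) \sum_(b <- enum_fset B) \sum_(c <- enum_fset C)
     nat_of_bool ((a + b)%R == c).

(* Main.v *)
Require Import Defs.
From HB Require Import structures.
From mathcomp Require Import all_boot all_order all_algebra.
From mathcomp Require Import finmap.
From mathcomp Require Import all_classical all_reals all_analysis.
From mathcomp Require Import zify ring lra.
Import Order.TTheory GRing.Theory Num.Theory.

Lemma sumbE (T : finType) (F : T -> bool) :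
  (\sum_(i : T) (F i : nat))%N = #|[pred i | F i]|.
Proof.
rewrite -sum1_card [RHS]big_mkcond /=; apply: eq_bigr => i _; by rewrite inE; case: (F i).
Qed.

Lemma sum_le1 n (F : 'I_n -> bool) :
  (forall i j, F i -> F j -> i = j) -> (\sum_(i < n) (F i : nat) <= 1)%N.
Proof.
move=> H; rewrite sumbE; apply/card_le1_eqP => i j; rewrite !inE => Fi Fj.
exact: H.
Qed.

Lemma sum_const_seq (T : Type) (A : seq T) (x : nat) :
  (\sum_(a <- A) x = size A * x)%N.
Proof. by elim: A => [|y A IH]; rewrite ?big_nil ?big_cons ?IH ?muln0 ?mulSn. Qed.

Lemma sum_seq_eq_le1 (R : eqType) (A : seq R) (x : R) :
  uniq A -> (\sum_(a <- A) ((a == x) : nat) <= 1)%N.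
Proof.
move=> uA; have -> : (\sum_(a <- A) ((a == x) : nat) = count_mem x A)%N.
  elim: (A) => [|y B IH]; first by rewrite big_nil.
  rewrite big_cons IH /=; by rewrite eq_sym.

by rewrite count_uniq_mem //; case: (x \in A).
Qed.

Definition sol (R : realType) (N : nat) (a : R) (b c : nat -> R) (j l : nat) :=
  [&& (j < N)%N, (l < N)%N & (a + b j == c l)%R].
Arguments sol {R}.

Lemma bad_bound (R : realType) (N K : nat) (a : R) (b c : nat -> R) :
  (0 < K)%N ->
  (forall j j', (j < j')%N -> (j' < N)%N -> (b j < b j')%R) ->
  (forall j j', (j < j')%N -> (j' < N)%N -> (c j < c j')%R) ->
  (\sum_(j < N) \sum_(l < N) (sol N a b c j l
     && ~~ [exists u : 'I_K, exists v : 'I_K, (0 < u)%N && (0 < v)%N && sol N a b c (j + u) (l + v)]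
     : nat) <= ((2 * N) %/ K).+1)%N.
Proof.
move=> K0 hb hc.
pose bad := fun j l : nat => sol N a b c j l
     && ~~ [exists u : 'I_K, exists v : 'I_K, (0 < u)%N && (0 < v)%N && sol N a b c (j + u) (l + v)].
rewrite pair_big /= sumbE.
apply: (@leq_trans #|[pred p : 'I_N * 'I_N | bad p.1 p.2]|); first by [].
pose f := fun p : 'I_N * 'I_N => (inord ((p.1 + p.2) %/ K) : 'I_((2 * N) %/ K).+1).
have cinj : forall l l', (l < N)%N -> (l' < N)%N -> c l = c l' -> l = l'.
  move=> l l' lN l'N e; case: (ltngtP l l') => // h.
    by have := hc _ _ h l'N; rewrite e ltxx.
  by have := hc _ _ h lN; rewrite e ltxx.
have key : forall p q : 'I_N * 'I_N, bad p.1 p.2 -> bad q.1 q.2 -> (p.1 <= q.1)%N ->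
    ((p.1 + p.2) %/ K = (q.1 + q.2) %/ K)%N -> p = q.
  move=> [p1 p2] [q1 q2] /=; rewrite /bad /sol.
  move=> /andP [/and3P [_ _ /eqP ep] nex] /andP [/and3P [_ _ /eqP eq] _] le.
  case: (ltngtP p1 q1) le => // h _.
  -
    have hbl := hb _ _ h (ltn_ord q1).
    have hl : (p2 < q2)%N.
      case: (ltngtP p2 q2) => // h2.
        have := hc _ _ h2 (ltn_ord p2); rewrite -ep -eq => /ltW.
        by rewrite lerD2l leNgt hbl.
      move: ep eq; rewrite h2 => <- /addrI ebq.
      by move: hbl; rewrite ebq ltxx.
    have big : (p1 + p2 + K <= q1 + q2)%N.
      case: (leqP K (q1 - p1)) => hK; first by clear -hK h hl; lia.
      case: (leqP K (q2 - p2)) => hK2; first by clear -hK2 h hl; lia.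
      exfalso; move/negP: nex; apply; apply/existsP; exists (Ordinal hK).
      apply/existsP; exists (Ordinal hK2) => /=.
      rewrite !subn_gt0 h hl !subnKC ?(ltnW h) ?(ltnW hl) // !ltn_ord eq eqxx; done.
    move=> ed; have := leq_div2r K big; rewrite divnDr ?dvdnn // divnn K0 ed.
    by rewrite addn1 ltnn.
  - move=> _; have e2 : c p2 = c q2 by rewrite -ep -eq h.
    have := cinj _ _ (ltn_ord p2) (ltn_ord q2) e2 => e22.
    by congr pair; apply: val_inj.
have finj : {in [pred p : 'I_N * 'I_N | bad p.1 p.2] &, injective f}.
  move=> p q; rewrite !inE => bp bq /(congr1 val) /=.
  have lt2 : forall r : 'I_N * 'I_N, ((r.1 + r.2) %/ K < ((2 * N) %/ K).+1)%N.
    move=> r; rewrite ltnS leq_div2r //.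
    have := ltn_ord r.1; have := ltn_ord r.2; lia.
  rewrite !inordK // => ed.
  case: (leqP p.1 q.1) => h; first exact: key.
  by apply/esym/key => //; apply: ltnW.
rewrite -(card_in_imset finj).
by apply: leq_trans (max_card _) _; rewrite card_ord.
Qed.

Lemma splitA (R : realType) (N K : nat) (a : R) (b c : nat -> R) :
  (\sum_(j < N) \sum_(l < N) ((a + b j == c l)%R : nat) <=
   \sum_(j < N) \sum_(l < N) (sol N a b c j l
     && ~~ [exists u : 'I_K, exists v : 'I_K, (0 < u)%N && (0 < v)%N && sol N a b c (j + u) (l + v)]
     : nat) +
   \sum_(j < N) \sum_(l < N) \sum_(u < K) \sum_(v < K)
      ((0 < u)%N && (0 < v)%N && sol N a b c j l && sol N a b c (j + u) (l + v) : nat))%N.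
Proof.
rewrite -big_split /=; apply: leq_sum => j _.
rewrite -big_split /=; apply: leq_sum => l _.
have -> : (a + b j == c l)%R = sol N a b c j l by rewrite /sol !ltn_ord.
case: (sol N a b c j l) => //=.
case E: [exists u : 'I_K, exists v : 'I_K, _] => //=.
move/existsP: E => [u /existsP [v H]].
rewrite (bigD1 u) //= (bigD1 v) //= andbT H.
by rewrite add0n -addnA add1n.
Qed.

Lemma GE (R : realType) (N K : nat) (A : seq R) (b c : nat -> R) (j l u v : nat) :
  uniq A ->
  (\sum_(a <- A) ((0 < u)%N && (0 < v)%N && sol N a b c j l && sol N a b c (j + u) (l + v) : nat)
   <= ((0 < u)%N && (0 < v)%N && (j + u < N)%N && (l + v < N)%N &&
       (c (l + v)%N - c l == b (j + u)%N - b j)%R : nat))%N.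
Proof.
move=> uA.
set E := (X in (_ <= nat_of_bool X)%N).
apply: (@leq_trans (\sum_(a <- A) ((a == c l - b j)%R : nat) * E)%N); last first.
  rewrite -big_distrl /=; rewrite -{2}(mul1n E); apply: leq_mul => //.
  exact: sum_seq_eq_le1.
apply: leq_sum => a _.
rewrite /sol; case/boolP: (_ && _ && _ && _) => //= /andP [/andP [/andP [u0 v0] s1] s2].
move: s1 s2 => /and3P [jN lN /eqP e1] /and3P [juN lvN /eqP e2].
rewrite /E u0 v0 juN lvN -e1 -e2 addrK eqxx /=.
by rewrite opprD addrACA subrr add0r eqxx.
Qed.

Lemma total (R : realType) (N K : nat) (A : seq R) (b c : nat -> R) :
  (0 < K)%N -> uniq A -> size A = N ->
  (forall j j', (j < j')%N -> (j' < N)%N -> (b j < b j')%R) ->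
  (forall j j', (j < j')%N -> (j' < N)%N -> (c j < c j')%R) ->
  (forall v l l', (0 < v)%N -> (l + v < N)%N -> (l' + v < N)%N ->
      (c (l + v)%N - c l = c (l' + v)%N - c l')%R -> l = l') ->
  (\sum_(a <- A) \sum_(j < N) \sum_(l < N) ((a + b j == c l)%R : nat)
    <= N * ((2 * N) %/ K).+1 + K * K * N)%N.
Proof.
move=> K0 uA sA hb hc hcd.
apply: (@leq_trans (\sum_(a <- A) (((2 * N) %/ K).+1 +
   \sum_(j < N) \sum_(l < N) \sum_(u < K) \sum_(v < K)
      ((0 < u)%N && (0 < v)%N && sol N a b c j l && sol N a b c (j + u) (l + v) : nat)))%N).
  apply: leq_sum => a _; eapply leq_trans; first exact: (splitA R N K a b c).
  by rewrite leq_add2r; apply: bad_bound.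
rewrite big_split /= sum_const_seq sA leq_add2l.
have -> : (K * K * N = \sum_(j < N) (K * K))%N by rewrite sum_nat_const card_ord mulnC.
rewrite exchange_big /=.
apply: leq_sum => j _; rewrite exchange_big /=.
refine (@leq_trans  (\sum_(l < N) \sum_(u < K) \sum_(v < K)
   ((0 < u)%N && (0 < v)%N && (j + u < N)%N && (l + v < N)%N &&
       (c (l + v)%N - c l == b (j + u)%N - b j)%R : nat))%N _ _ _ _).
  apply: leq_sum => l _; rewrite exchange_big /=; apply: leq_sum => u _.
  rewrite exchange_big /=; apply: leq_sum => v _.
  exact: GE.
rewrite exchange_big /=.
have -> : (K * K = \sum_(u < K) K)%N by rewrite sum_nat_const card_ord.
apply: leq_sum => u _; rewrite exchange_big /=.
rewrite -[X in (_ <= X)%N](card_ord K) -sum1_card.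
apply: leq_sum => v _; apply: sum_le1 => l1 l2.
move=> /andP [/andP [/andP [/andP [_ v0] _] l1N] /eqP e1].
move=> /andP [/andP [/andP [/andP [_ _] _] l2N] /eqP e2].
apply: val_inj; apply: (hcd v) => //.
by rewrite e1 e2.
Qed.

Local Open Scope ring_scope.

Lemma diff_mono (R : realType) (c : nat -> R) (N : nat) :
  (forall i i', (i < i')%N -> (i'.+1 < N)%N -> c i.+1 - c i < c i'.+1 - c i') ->
  forall v l l', (0 < v)%N -> (l < l')%N -> (l' + v < N)%N ->
    c (l + v)%N - c l < c (l' + v)%N - c l'.
Proof.
move=> hg; elim=> [//|w IH] l l' _ ll' lvN.
case: w IH lvN => [_|w IH] lvN.
  by rewrite !addn1 in lvN *; apply: hg.
have e : forall m, c (m + w.+2)%N - c m = (c (m + w.+1)%N - c m) + (c (m + w.+1).+1 - c (m + w.+1)%N).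
  by move=> m; rewrite addnS; lra.
rewrite !e; apply: ltrD.
  by apply: IH => //; rewrite addnS in lvN; apply: ltnW.
by apply: hg; rewrite ?ltn_add2r // -addnS.
Qed.

Arguments diff_mono {R c N}.

Lemma diff_inj (R : realType) (c : nat -> R) (N : nat) :
  (forall i i', (i < i')%N -> (i'.+1 < N)%N -> c i.+1 - c i < c i'.+1 - c i') \/
  (forall i i', (i < i')%N -> (i'.+1 < N)%N -> c i'.+1 - c i' < c i.+1 - c i) ->
  forall v l l', (0 < v)%N -> (l + v < N)%N -> (l' + v < N)%N ->
    c (l + v)%N - c l = c (l' + v)%N - c l' -> l = l'.
Proof.
move=> H v l l' v0 lN l'N e.
have mono : forall m m', (m < m')%N -> (m' + v < N)%N ->
    c (m + v)%N - c m != c (m' + v)%N - c m'.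
  move=> m m' mm' mN; case: H => hg.
    by rewrite lt_eqF // (diff_mono hg).
  have hg' : forall i i', (i < i')%N -> (i'.+1 < N)%N ->
      (- c i.+1) - (- c i) < (- c i'.+1) - (- c i').
    by move=> i i' ii' iN; have := hg i i' ii' iN; lra.
  have := @diff_mono R (fun i => - c i) N hg' v m m' v0 mm' mN => /= H'; apply/eqP => E; lra.
case: (ltngtP l l') => // h.
  by move/eqP: e; rewrite (negbTE (mono _ _ h l'N)).
by move/eqP: e; rewrite eq_sym (negbTE (mono _ _ h lN)).
Qed.

Lemma sum_sorted (R : realType) (B : {fset R}) (F : R -> nat) :
  (\sum_(x <- enum_fset B) F x = \sum_(0 <= j < #|` B|%fset) F (nth 0%R (sorted_elems B) j))%N.
Proof.
rewrite (perm_big (sorted_elems B)); last by rewrite perm_sym /sorted_elems perm_sort.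
by rewrite (big_nth 0) /sorted_elems size_sort.
Qed.

Lemma sorted_strict (R : realType) (B : {fset R}) (j j' : nat) :
  (j < j')%N -> (j' < #|` B|%fset)%N -> (sorted_elems B)`_j < (sorted_elems B)`_j'.
Proof.
move=> jj' jN.
have s : sorted <%R (sorted_elems B).
  by rewrite lt_sorted_uniq_le sort_uniq fset_uniq sort_sorted //; apply: le_total.
apply: (sorted_ltn_nth lt_trans 0 s) => //; rewrite inE /sorted_elems size_sort //.
exact: ltn_trans jN.
Qed.

Lemma convex_hg (R : realType) (C : {fset R}) :
  one_convex C ->
  let c := fun l => (sorted_elems C)`_l in
  (forall i i', (i < i')%N -> (i'.+1 < #|` C|%fset)%N -> c i.+1 - c i < c i'.+1 - c i') \/
  (forall i i', (i < i')%N -> (i'.+1 < #|` C|%fset)%N -> c i'.+1 - c i' < c i.+1 - c i).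
Proof.
move=> H c.
set s := sorted_elems C.
have sz : size s = #|` C|%fset by rewrite /s /sorted_elems size_sort.
have gE : forall i, (i < (size s).-1)%N -> (gaps s)`_i = c i.+1 - c i.
  move=> i hi; rewrite /gaps (nth_map 0%N) ?size_iota // nth_iota //.
have inG : forall i, (i.+1 < #|` C|%fset)%N -> i \in [pred n | (n < size (gaps s))%N].
  by move=> i hi; rewrite inE /gaps size_map size_iota sz; lia.
case: H => H; [left | right] => i i' ii' hi; have hi0 : (i.+1 < #|` C|%fset)%N by lia.
- have := sorted_ltn_nth lt_trans 0 H i i' (inG i hi0) (inG i' hi) ii'.
  rewrite !gE //; rewrite sz; lia.
- have tr : transitive (>%R : rel R) by move=> x y z h1 h2; apply: lt_trans h2 h1.
  have := sorted_ltn_nth tr 0 H i i' (inG i hi0) (inG i' hi) ii'.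
  rewrite !gE //; rewrite sz; lia.
Qed.

Lemma final_ineq (R : realType) (t k y : R) : 1 <= y -> y < k -> k <= y + 1 -> 0 <= t ->
  t * k <= y ^+ 3 * (2 * y ^+ 3 + k) + k ^+ 3 * y ^+ 3 -> t <= 7 * y ^+ 5.
Proof.
move=> y1 yk ky t0 H.
have k0 : 0 < k by lra.
have y0 : 0 < y by lra.
have h1 : 2 * y ^+ 3 <= 2 * y ^+ 2 * k.
  have : 0 <= y ^+ 2 * (k - y) by apply: mulr_ge0; [exact: sqr_ge0 | lra].
  rewrite !exprS expr0; nra.
have h2 : k <= y ^+ 2 * k.
  have : 0 <= (y ^+ 2 - 1) * k by apply: mulr_ge0; [rewrite !exprS expr0; nra | lra].
  nra.
have h3 : k ^+ 3 <= 4 * y ^+ 2 * k.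
  have hh : k ^+ 2 <= 4 * y ^+ 2 by rewrite !exprS expr0; nra.
  have : 0 <= (4 * y ^+ 2 - k ^+ 2) * k by apply: mulr_ge0; lra.
  rewrite !exprS expr0; nra.
have h4 : y ^+ 3 * (2 * y ^+ 3 + k) + k ^+ 3 * y ^+ 3 <= (7 * y ^+ 5) * k.
  have -> : y ^+ 3 * (2 * y ^+ 3 + k) + k ^+ 3 * y ^+ 3 = y ^+ 3 * (2 * y ^+ 3 + k + k ^+ 3) by ring.
  have -> : 7 * y ^+ 5 * k = y ^+ 3 * (7 * y ^+ 2 * k) by ring.
  rewrite ler_pM2l; [lra | exact: exprn_gt0].
by rewrite -(ler_pM2r k0); apply: le_trans H h4.
Qed.

Theorem mainTheorem13 (R : realType) :
  exists K : R, 0 < K /\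
    forall (N : nat) (A B C : {fset R}),
      #|` A|%fset = N -> #|` B|%fset = N -> #|` C|%fset = N ->
      one_convex A -> one_convex B -> one_convex C ->
      (num_solutions A B C)%:R <= K * (N%:R `^ (5 / 3 : R)).
Proof.
exists 7; split => // N A B C hA hB hC _ _ cC.
pose b := fun j => nth 0 (sorted_elems B) j.
pose c := fun j => nth 0 (sorted_elems C) j.
have solE : num_solutions A B C =
   (\sum_(a <- enum_fset A) \sum_(j < N) \sum_(l < N) ((a + b j == c l)%R : nat))%N.
  rewrite /num_solutions; apply: eq_bigr => a _; rewrite sum_sorted hB big_mkord.
  by apply: eq_bigr => j _; rewrite sum_sorted hC big_mkord.
pose y : R := N%:R `^ (3^-1).
have y0 : 0 <= y by apply: powR_ge0.
pose k := (Num.truncn y).+1.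
have [ky yk] : (k%:R <= y + 1) /\ (y < k%:R).
  have /andP [h1 h2] := truncn_itv y0.
  by split => //; rewrite /k -addn1 natrD lerD2r.
have hb : forall j j', (j < j')%N -> (j' < N)%N -> b j < b j'.
  by move=> j j' h h'; apply: sorted_strict => //; rewrite hB.
have hc : forall j j', (j < j')%N -> (j' < N)%N -> c j < c j'.
  by move=> j j' h h'; apply: sorted_strict => //; rewrite hC.
have hcd : forall v l l', (0 < v)%N -> (l + v < N)%N -> (l' + v < N)%N ->
      (c (l + v)%N - c l = c (l' + v)%N - c l') -> l = l'.
  by apply: diff_inj; rewrite -hC; apply: convex_hg.
have Hn := total R N k (enum_fset A) b c (ltn0Sn _) (fset_uniq A) hA hb hc hcd.
rewrite -solE in Hn.
set T := num_solutions A B C in Hn *.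
clearbody k.
have Hk : (T * k <= N * (2 * N + k) + k * k * k * N)%N.
  have := leq_trunc_div (2 * N)%N k; set q := ((2 * N) %/ k)%N => hq.
  nia.
have yN : y ^+ 3 = N%:R.
  rewrite -powR_mulrn // -powRrM mulVf ?powRr1 //.
have y5 : N%:R `^ (5 / 3 : R) = y ^+ 5.
  by rewrite -powR_mulrn // -powRrM mulrC.
rewrite y5.
case: (posnP N) => [N0 | Npos].
  have : (T <= 0)%N by move: Hn; rewrite N0 !muln0 !mul0n.
  by rewrite leqn0 => /eqP ->; rewrite mulr_ge0 // exprn_ge0.
have y1 : 1 <= y.
  have : 1 <= y ^+ 3 by rewrite yN ler1n.
  rewrite !exprS expr0; nra.
apply: (@final_ineq R _ k%:R) => //.
rewrite (_ : k%:R ^+ 3 = k%:R * k%:R * k%:R :> R); last by rewrite !exprS expr0 mulr1 mulrA.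
move: Hk; rewrite -(ler_nat R) !natrD !natrM -yN.
by rewrite natrD natrM -yN.
Qed.
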